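(* Let $N\ge 1$ and $K\ge 2$ be integers with $K$ even and $N$ divisible by $K$, put $m=N/K$, and let $\alpha\in[0,2]$. Let $S_0\subset S$ be the set of the $2m+1$ pure strategies $s^{(j)}=(j,\,2m-j,\,j,\,2m-j,\,\ldots,\,j,\,2m-j)'$ for $j=0,1,\ldots,2m$ (odd-indexed battlefields receive $j$, even-indexed battlefields receive $2m-j$). Then the mixed strategy that randomizes uniformly over $S_0$ is a symmetric equilibrium strategy of $\mathcal{B}_\alpha(N,K)$, and in the resulting equilibrium each player's expected payoff equals $\pi^*=K\cdot\frac{m+\alpha/2}{2m+1}$.
   Context: Fix integers $N\ge1$, $K\ge2$ and a real number $\alpha$. The Colonel Blotto game $\mathcal{B}_\alpha(N,K)$ is the two-player simultaneous-move game with players $A,B$, each with pure strategy set $S=\{s\in\{0,1,\ldots,N\}^K:\sum_{k=1}^K s_k=N\}$, in which the payoff of player $i$ at the pure profile $(s^i,s^{-i})$ is $\pi^i(s^i,s^{-i})=\sum_{k=1}^K\big(\mathbf 1[s^i_k>s^{-i}_k]+\tfrac{\alpha}{2}\mathbf 1[s^i_k=s^{-i}_k]\big)$ (here $-i$ denotes the opponent of $i$). Mixed strategies are probability distributions on $S$, and payoffs of mixed profiles are expected payoffs (players randomize independently). A Nash equilibrium is a mixed profile from which no player can raise her expected payoff by a unilateral deviation. A symmetric equilibrium strategy is a mixed strategy $\sigma$ such that $(\sigma,\sigma)$ is a Nash equilibrium. *)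

(* Defs.v *)
From HB Require Import structures.
From mathcomp Require Import all_boot all_order all_algebra.
From mathcomp Require Import reals.
Set Implicit Arguments. Unset Strict Implicit. Unset Printing Implicit Defensive.
Import Order.TTheory GRing.Theory Num.Theory.
Local Open Scope ring_scope.

Definition strat (N K : nat) :=
  {s : {ffun 'I_K -> 'I_N.+1} | (\sum_(k < K) (s k : nat))%N == N}.

Definition blotto_payoff (R : realType) (alpha : R) (N K : nat)
  (s t : strat N K) : R :=
  \sum_(k < K) (((val t k : nat) < (val s k : nat))%N%:R
                + alpha / 2 * ((val s k : nat) == (val t k : nat))%:R).

Definition is_mixed (R : realType) (N K : nat) (sigma : strat N K -> R) : Prop :=
  (forall s, 0 <= sigma s) /\ \sum_(s : strat N K) sigma s = 1.

Definition payoffA (R : realType) (alpha : R) (N K : nat)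
  (sigmaA sigmaB : strat N K -> R) : R :=
  \sum_(s : strat N K) \sum_(t : strat N K)
     sigmaA s * sigmaB t * blotto_payoff alpha s t.

Definition payoffB (R : realType) (alpha : R) (N K : nat)
  (sigmaA sigmaB : strat N K -> R) : R :=
  \sum_(s : strat N K) \sum_(t : strat N K)
     sigmaA s * sigmaB t * blotto_payoff alpha t s.

Definition nash_equilibrium (R : realType) (alpha : R) (N K : nat)
  (sigmaA sigmaB : strat N K -> R) : Prop :=
  is_mixed sigmaA /\ is_mixed sigmaB /\
  (forall tau, is_mixed tau -> payoffA alpha tau sigmaB <= payoffA alpha sigmaA sigmaB) /\
  (forall tau, is_mixed tau -> payoffB alpha sigmaA tau <= payoffB alpha sigmaA sigmaB).

Definition symmetric_equilibrium_strategy (R : realType) (alpha : R) (N K : nat)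
  (sigma : strat N K -> R) : Prop :=
  nash_equilibrium alpha sigma sigma.

(* S_0: the strategies s^(j), j = 0..2m: battlefield k (1-based) gets j if k is
   odd and 2m - j if k is even; with 0-based index k this means j if k is even. *)
Definition S0 (N K m : nat) : {set strat N K} :=
  [set s : strat N K | [exists j : 'I_(2 * m).+1, [forall k : 'I_K,
      (val s k : nat) == (if ~~ odd k then (j : nat) else (2 * m - j)%N)]]].

Definition uniform_on (R : realType) (N K : nat) (A : {set strat N K})
  (s : strat N K) : R :=
  if s \in A then (#|A|%:R)^-1 else 0.

(* Main.v *)
Require Import Defs.
From HB Require Import structures.
From mathcomp Require Import all_boot all_order all_algebra.
From mathcomp Require Import reals.
From mathcomp Require Import zify ring lra.
Import Order.TTheory GRing.Theory Num.Theory.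
Local Open Scope ring_scope.

Definition vS (m k j : nat) : nat := if ~~ odd k then j else (2 * m - j)%N.

Lemma sum_alt (K a b : nat) : ~~ odd K ->
  (\sum_(k < K) (if ~~ odd k then a else b))%N = (K./2 * (a + b))%N.
Proof.
move=> hK.
have [h ->] : exists h, K = h.*2.
  by exists K./2; rewrite -{1}[K]odd_double_half (negbTE hK) add0n.
rewrite doubleK; elim: h => [|h IH]; first by rewrite big_ord0.
rewrite doubleS !big_ord_recr /= IH /= odd_double /=; lia.
Qed.

Definition hypS (N K m : nat) :=
  [&& (K * m == N)%N, ~~ odd K, (2 * m <= N)%N & (0 < K)%N].

Definition sfun (N K m j : nat) : {ffun 'I_K -> 'I_N.+1} :=
  [ffun k : 'I_K => inord (vS m k j)].

Lemma vS_le m k j : (j <= 2 * m)%N -> (vS m k j <= 2 * m)%N.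
Proof. rewrite /vS; case: (odd k) => /=; lia. Qed.

Lemma sfunE N K m j k : hypS N K m -> (j <= 2 * m)%N ->
  (sfun N K m j k : nat) = vS m k j.
Proof.
case/and4P=> _ _ h2 _ hj; rewrite ffunE inordK //.
have := @vS_le m k j hj; lia.
Qed.

Lemma sfun_sum N K m j : hypS N K m -> (j <= 2 * m)%N ->
  (\sum_(k < K) (sfun N K m j k : nat))%N == N.
Proof.
move=> H hj; rewrite (eq_bigr (fun k : 'I_K => vS m k j)); last first.
  by move=> k _; rewrite sfunE.
case/and4P: H => /eqP hN hK _ _.
rewrite /vS sum_alt //.
have hK2 := odd_double_half K; rewrite (negbTE hK) add0n in hK2.
rewrite -hK2 in hN; move: (K./2) hN => h hN.
apply/eqP; rewrite -hN -muln2 subnKC // mulnA.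
done. Qed.

Definition sj N K m (H : hypS N K m) (j : 'I_(2 * m).+1) : strat N K :=
  exist _ (sfun N K m j) (sfun_sum N K m j H (ltn_ord j)).

Arguments sj {N K m} H j.

Lemma sjE N K m (H : hypS N K m) j k : (val (sj H j) k : nat) = vS m k j.
Proof. by rewrite /= (sfunE N K m j k H) // -ltnS. Qed.

Lemma sj_inj N K m (H : hypS N K m) : injective (sj H).
Proof.
move=> i j e.
have K0 : (0 < K)%N by case/and4P: (H).
have := congr1 (fun s : strat N K => (val s (Ordinal K0) : nat)) e.
rewrite !sjE /vS /= => h; exact: val_inj.
Qed.

Lemma S0E N K m (H : hypS N K m) : S0 N K m = [set sj H j | j : 'I_(2 * m).+1].
Proof.
apply/setP => s; rewrite inE; apply/existsP/imsetP.
- case=> j /forallP hj; exists j => //; apply/val_inj/ffunP => k; apply/ord_inj.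
  by rewrite (eqP (hj k)) sjE.
- by case=> j _ ->; exists j; apply/forallP => k; rewrite sjE.
Qed.

Arguments S0E {N K m} H.
Arguments sj_inj {N K m} H.

Lemma card_S0 N K m (H : hypS N K m) : #|S0 N K m| = (2 * m).+1.
Proof. by rewrite (S0E H) card_imset ?card_ord //; apply: sj_inj. Qed.

Arguments card_S0 {N K m} H.

Lemma sum_S0 (R : realType) N K m (H : hypS N K m) (G : strat N K -> R) :
  \sum_(s in S0 N K m) G s = \sum_(j < (2 * m).+1) G (sj H j).
Proof. by rewrite (S0E H) big_imset //=; apply: in2W; apply: sj_inj. Qed.

Arguments sum_S0 {R N K m} H G.

Lemma sum_unif (R : realType) N K (A : {set strat N K}) (G : strat N K -> R) :
  \sum_s uniform_on R A s * G s = (#|A|%:R)^-1 * \sum_(s in A) G s.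
Proof.
rewrite mulr_sumr [RHS]big_mkcond; apply: eq_bigr => s _.
by rewrite /uniform_on; case: (s \in A); rewrite ?mul0r ?mulr0.
Qed.

Lemma cnt_lt n x : (\sum_(j < n) ((j : nat) < x))%N = minn n x.
Proof.
elim: n => [|n IH]; first by rewrite big_ord0 min0n.
rewrite big_ord_recr /= IH; case: (ltnP n x) => h /=; lia.
Qed.

Lemma cnt_eq n x : (\sum_(j < n) (x == (j : nat)))%N = (x < n)%N.
Proof.
elim: n => [|n IH]; first by rewrite big_ord0.
rewrite big_ord_recr /= IH ltnS; case: (ltngtP x n) => h /=; lia.
Qed.

Lemma reindex_vS (R : realType) m k (F : nat -> R) :
  \sum_(j < (2 * m).+1) F (vS m k j) = \sum_(j < (2 * m).+1) F j.
Proof.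
rewrite /vS; case: (odd k) => //=.
rewrite [RHS](reindex_inj rev_ord_inj) /=; apply: eq_bigr => j _.
by rewrite subSS.
Qed.

Lemma sum_vs_sj (R : realType) (alpha : R) N K m (H : hypS N K m) (t : strat N K) :
  \sum_(j < (2 * m).+1) blotto_payoff alpha t (sj H j) =
  \sum_(k < K) ((minn (2 * m).+1 (val t k))%:R
                + alpha / 2 * ((val t k < (2 * m).+1)%N)%:R).
Proof.
rewrite /blotto_payoff exchange_big; apply: eq_bigr => k _.
under eq_bigr => j _ do rewrite sjE.
rewrite (reindex_vS R m k (fun y => (y < val t k)%N%:R
           + alpha / 2 * ((val t k : nat) == y)%:R)).
by rewrite big_split /= -mulr_sumr -!natr_sum cnt_lt cnt_eq.
Qed.

Lemma total_sum (R : realType) (alpha : R) N K m (H : hypS N K m) (t : strat N K) :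
  \sum_(k < K) ((val t k : nat)%:R + alpha / 2) = K%:R * (m%:R + alpha / 2).
Proof.
rewrite big_split /= -natr_sum (eqP (valP t)) sumr_const card_ord.
case/and4P: H => /eqP <- _ _ _.
rewrite natrM -mulr_natl; ring.
Qed.

Lemma dev_bound (R : realType) (alpha : R) N K m (H : hypS N K m) (t : strat N K) :
  0 <= alpha ->
  \sum_(j < (2 * m).+1) blotto_payoff alpha t (sj H j) <= K%:R * (m%:R + alpha / 2).
Proof.
move=> ha; rewrite sum_vs_sj -(total_sum R alpha N K m H t).
apply: ler_sum => k _; apply: lerD.
  by rewrite ler_nat geq_minr.
have ha2 : 0 <= alpha / 2 by rewrite divr_ge0.
by case: (_ < _)%N; rewrite ?mulr1 ?mulr0.
Qed.

Lemma exact_val (R : realType) (alpha : R) N K m (H : hypS N K m) i :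
  \sum_(j < (2 * m).+1) blotto_payoff alpha (sj H i) (sj H j) = K%:R * (m%:R + alpha / 2).
Proof.
rewrite sum_vs_sj -(total_sum R alpha N K m H (sj H i)).
apply: eq_bigr => k _.
have hv : (vS m k i < (2 * m).+1)%N by rewrite ltnS vS_le // -ltnS.
by rewrite sjE hv mulr1; congr (_%:R + _); apply/minn_idPr/ltnW.
Qed.

Lemma payoffA_E (R : realType) (alpha : R) N K (x y : strat N K -> R) :
  payoffA alpha x y = \sum_s x s * \sum_t y t * blotto_payoff alpha s t.
Proof.
rewrite /payoffA; apply: eq_bigr => s _; rewrite mulr_sumr.
by apply: eq_bigr => t _; rewrite mulrA.
Qed.

Lemma payoffB_E (R : realType) (alpha : R) N K (x y : strat N K -> R) :
  payoffB alpha x y = \sum_t y t * \sum_s x s * blotto_payoff alpha t s.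
Proof.
rewrite /payoffB exchange_big; apply: eq_bigr => t _; rewrite mulr_sumr.
by apply: eq_bigr => s _; rewrite mulrA [x s * _]mulrC.
Qed.

Theorem proposition1 (R : realType) (N K : nat) (alpha : R) :
  (1 <= N)%N -> (2 <= K)%N -> ~~ odd K -> (K %| N)%N ->
  0 <= alpha <= 2 ->
  let m := (N %/ K)%N in
  let sigma0 := uniform_on R (S0 N K m) in
  symmetric_equilibrium_strategy alpha sigma0 /\
  payoffA alpha sigma0 sigma0 = K%:R * ((m%:R + alpha / 2) / (2 * m + 1)%N%:R) /\
  payoffB alpha sigma0 sigma0 = K%:R * ((m%:R + alpha / 2) / (2 * m + 1)%N%:R).
Proof.
move=> hN hK hKo hdiv /andP [ha _] m sigma0.
have hm : (K * m)%N = N by rewrite /m mulnC divnK.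
have H : hypS N K m.
  apply/and4P; split => //; first by rewrite hm.
  - clearbody m; nia.
  - lia.
set pi := K%:R * ((m%:R + alpha / 2) / (2 * m + 1)%N%:R).
have hc : (#|S0 N K m|%:R)^-1 * (K%:R * (m%:R + alpha / 2)) = pi.
  by rewrite (card_S0 H) /pi addn1; ring.
set V := fun s : strat N K => \sum_t sigma0 t * blotto_payoff alpha s t.
have VE s : V s = (#|S0 N K m|%:R)^-1 *
                  \sum_(j < (2 * m).+1) blotto_payoff alpha s (sj H j).
  by rewrite /V /sigma0 sum_unif (sum_S0 H).
have Vle s : V s <= pi.
  rewrite VE -hc; apply: ler_wpM2l; first by rewrite invr_ge0 ler0n.
  exact: dev_bound.
have Veq i : V (sj H i) = pi by rewrite VE exact_val hc.
have n0 : (#|S0 N K m|%:R : R) != 0 by rewrite (card_S0 H) pnatr_eq0.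
have mixed : is_mixed sigma0.
  split.
    by move=> s; rewrite /sigma0 /uniform_on; case: ifP => // _; rewrite invr_ge0 ler0n.
  have -> : \sum_s sigma0 s = \sum_s sigma0 s * 1 by apply: eq_bigr => s _; rewrite mulr1.
  by rewrite sum_unif sumr_const mulVf.
have PA : payoffA alpha sigma0 sigma0 = pi.
  rewrite payoffA_E /sigma0 sum_unif (sum_S0 H).
  under eq_bigr => j _ do rewrite -/(V _) Veq.
  by rewrite sumr_const card_ord -[pi *+ _]mulr_natl -(card_S0 H) mulrA mulVf // mul1r.
have PB : payoffB alpha sigma0 sigma0 = pi.
  by rewrite -PA payoffB_E payoffA_E.
have dev tau : is_mixed tau -> \sum_s tau s * V s <= pi.
  case=> h0 h1; apply: le_trans (_ : \sum_s tau s * pi <= pi).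
    by apply: ler_sum => s _; apply: ler_wpM2l.
  by rewrite -mulr_suml h1 mul1r.
split; last by split.
split; first exact: mixed.
split; first exact: mixed.
split.
  by move=> tau htau; rewrite PA payoffA_E; exact: dev.
by move=> tau htau; rewrite PB payoffB_E; exact: dev.
Qed.
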